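(* Let $G$ be a connected graph and $r\in\mathbb{N}$. For every covering $p:C\to G$ that preserves $(r/2)$-balls there is a covering $q:G_r\to C$ such that $p_r=p\circ q$, and all such coverings $q$ are equivalent.
   Context: Graphs may have loops and parallel edges and are viewed as 1-complexes; coverings have connected covering spaces. A cycle may be a loop or a pair of parallel edges; a closed walk once around a cycle $O$ traverses every edge of $O$ exactly once. $\pi_1^r(G,x_0)$ is the subgroup of $\pi_1(G,x_0)$ generated by the classes of closed walks $W_0QW_0^-$, $W_0$ a walk from $x_0$ to a vertex $y$, $Q$ a closed walk at $y$ once around a cycle of length at most $r$, $W_0^-$ the reverse of $W_0$. The $r$-local covering $p_r:G_r\to G$ is the connected normal covering with characteristic subgroup $\pi_1^r(G,x_0)$. For a vertex $v$ of a graph $X$, $B_X(v,r/2)$ is the subgraph formed by the vertices at distance at most $r/2$ from $v$ and the edges $xy$ with $d_X(v,x)+1+d_X(y,v)\le r$. A covering $p:C\to G$ preserves $(r/2)$-balls if for every vertex $v$ of $G$ and every lift $\hat v$, $p$ maps $B_C(\hat v,r/2)$ isomorphically onto $B_G(v,r/2)$. Two coverings $q:X\to Y$, $q':X'\to Y$ are equivalent if there is a homeomorphism $h:X\to X'$ with $q'\circ h=q$. *)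

(* Defs.v *)
From Stdlib Require Import List Arith Relations.
Import ListNotations.
Set Implicit Arguments.

(* A graph: vertices, darts (oriented edges), tail map and a fixed-point-free
   involution reversing darts.  An edge is a pair {d, rv d}; a loop is an edge
   whose two darts have equal tails. *)
Record graph := Graph {
  V : Type;
  D : Type;
  tl : D -> V;
  rv : D -> D;
  rv_inv : forall d, rv (rv d) = d;
  rv_neq : forall d, rv d <> d }.

Definition hd (G : graph) (d : D G) : V G := tl G (rv G d).

Fixpoint is_walk (G : graph) (x : V G) (w : list (D G)) : Prop :=
  match w with
  | [] => True
  | d :: w' => tl G d = x /\ is_walk G (hd G d) w'
  end.

Fixpoint wend (G : graph) (x : V G) (w : list (D G)) : V G :=
  match w with
  | [] => x
  | d :: w' => wend G (hd G d) w'
  end.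

Definition connected (G : graph) : Prop :=
  inhabited (V G) /\
  forall x y : V G, exists w, is_walk G x w /\ wend G x w = y.

Record gmap (G H : graph) := GMap { mV : V G -> V H; mD : D G -> D H }.

Definition is_morphism (G H : graph) (f : gmap G H) : Prop :=
  (forall d, tl H (mD f d) = mV f (tl G d)) /\
  (forall d, mD f (rv G d) = rv H (mD f d)).

Definition is_covering (G H : graph) (f : gmap G H) : Prop :=
  connected G /\ @is_morphism G H f /\
  (forall y : V H, exists x, mV f x = y) /\
  (forall (x : V G) (e : D H), tl H e = mV f x ->
     exists! d : D G, tl G d = x /\ mD f d = e).

(* Q is a closed walk at x going once around a cycle:
   nonempty, closed, with pairwise distinct vertices and pairwise distinct
   edges.  (length 1 = loop, length 2 = pair of parallel edges) *)
Definition cycle_walk (G : graph) (x : V G) (Q : list (D G)) : Prop :=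
  is_walk G x Q /\ wend G x Q = x /\ 1 <= length Q /\
  NoDup (map (tl G) Q) /\
  (forall i j d e, i <> j -> nth_error Q i = Some d -> nth_error Q j = Some e ->
     e <> d /\ e <> rv G d).

Inductive rstep (G : graph) (r : nat) (x0 : V G) : list (D G) -> list (D G) -> Prop :=
| rstep_back : forall a b d, tl G d = wend G x0 a ->
    rstep G r x0 (a ++ b) (a ++ d :: rv G d :: b)
| rstep_cyc : forall a b Q, cycle_walk G (wend G x0 a) Q -> length Q <= r ->
    rstep G r x0 (a ++ b) (a ++ Q ++ b).

Definition requiv (G : graph) (r : nat) (x0 : V G) : relation (list (D G)) :=
  clos_refl_sym_trans _ (rstep G r x0).

Definition in_pi1r (G : graph) (r : nat) (x0 : V G) (W : list (D G)) : Prop :=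
  @requiv G r x0 W [].

(* pr : X -> G, with base point xh0 over x0, is a covering with
   characteristic subgroup pi_1^r(G, x0): a closed walk W at x0 lifts to a
   closed walk at xh0 iff [W] lies in pi_1^r(G, x0).  This characterizes the
   r-local covering p_r : G_r -> G up to equivalence. *)
Definition is_r_local_covering (G : graph) (r : nat) (x0 : V G)
    (X : graph) (pr : gmap X G) (xh0 : V X) : Prop :=
  @is_covering X G pr /\ mV pr xh0 = x0 /\
  forall W, is_walk G x0 W -> wend G x0 W = x0 ->
    ((exists W', is_walk X xh0 W' /\ map (mD pr) W' = W /\ wend X xh0 W' = xh0)
     <-> @in_pi1r G r x0 W).

Definition within (G : graph) (v x : V G) (n : nat) : Prop :=
  exists w, is_walk G v w /\ wend G v w = x /\ length w <= n.

Arguments within {G} v x n.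

(* vertices and darts of B_G(v, r/2) *)
Definition ballV (G : graph) (v : V G) (r : nat) (x : V G) : Prop :=
  exists n, within v x n /\ 2 * n <= r.
Definition ballD (G : graph) (v : V G) (r : nat) (d : D G) : Prop :=
  exists a b, within v (tl G d) a /\ within v (hd G d) b /\ a + 1 + b <= r.

Arguments ballV {G} v r x.
Arguments ballD {G} v r d.

Definition preserves_balls (C G : graph) (p : gmap C G) (r : nat) : Prop :=
  forall vh : V C,
    (forall x, ballV vh r x -> ballV (mV p vh) r (mV p x)) /\
    (forall y, ballV (mV p vh) r y -> exists x, ballV vh r x /\ mV p x = y) /\
    (forall x x', ballV vh r x -> ballV vh r x' -> mV p x = mV p x' -> x = x') /\
    (forall d, ballD vh r d -> ballD (mV p vh) r (mD p d)) /\
    (forall e, ballD (mV p vh) r e -> exists d, ballD vh r d /\ mD p d = e) /\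
    (forall d d', ballD vh r d -> ballD vh r d' -> mD p d = mD p d' -> d = d').

Arguments preserves_balls {C G} p r.

Definition factors (X C G : graph) (f : gmap X G) (g : gmap C G) (h : gmap X C) : Prop :=
  (forall x, mV f x = mV g (mV h x)) /\ (forall d, mD f d = mD g (mD h d)).

Arguments factors {X C G} f g h.

Definition bij (A B : Type) (f : A -> B) : Prop :=
  (forall a a', f a = f a' -> a = a') /\ (forall b, exists a, f a = b).

Definition equivalent_cov (X C : graph) (q q' : gmap X C) : Prop :=
  exists h : gmap X X, @is_morphism X X h /\ bij (mV h) /\ bij (mD h) /\
    (forall x, mV q' (mV h x) = mV q x) /\ (forall d, mD q' (mD h d) = mD q d).

Arguments equivalent_cov {X C} q q'.
Arguments is_r_local_covering {G} r x0 {X} pr xh0.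
Arguments is_covering {G H} f.
Arguments is_morphism {G H} f.

(* Main.v *)
From Stdlib Require Import List Arith Relations Lia Classical ClassicalEpsilon.
Require Import Defs.
Import ListNotations.

Definition revw (G : graph) (w : list (D G)) : list (D G) := rev (map (rv G) w).

Lemma is_walk_app (G : graph) (x : V G) A B :
  is_walk G x (A ++ B) <-> is_walk G x A /\ is_walk G (wend G x A) B.
Proof.
  revert x; induction A as [|d A IH]; intros x; simpl.
  - tauto.
  - rewrite IH. tauto.
Qed.

Lemma wend_app (G : graph) (x : V G) A B :
  wend G x (A ++ B) = wend G (wend G x A) B.
Proof. revert x; induction A; intros; simpl; auto. Qed.

Lemma hd_rv (G : graph) d : hd G (rv G d) = tl G d.
Proof. unfold hd. now rewrite rv_inv. Qed.

Lemma revw_cons (G : graph) d w : revw G (d :: w) = revw G w ++ [rv G d].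
Proof. reflexivity. Qed.

Lemma revw_app (G : graph) A B : revw G (A ++ B) = revw G B ++ revw G A.
Proof. unfold revw. now rewrite map_app, rev_app_distr. Qed.

Lemma revw_invol (G : graph) w : revw G (revw G w) = w.
Proof.
  unfold revw. rewrite map_rev, rev_involutive, map_map.
  induction w; simpl; auto. now rewrite rv_inv, IHw.
Qed.

Lemma length_revw (G : graph) w : length (revw G w) = length w.
Proof. unfold revw. now rewrite length_rev, length_map. Qed.

Lemma revw_walk (G : graph) (x : V G) w :
  is_walk G x w -> is_walk G (wend G x w) (revw G w) /\ wend G (wend G x w) (revw G w) = x.
Proof.
  revert x; induction w as [|d w IH]; intros x Hw; simpl in *.
  - auto.
  - destruct Hw as [Hd Hw]. destruct (IH _ Hw) as [H1 H2].
    rewrite revw_cons, is_walk_app, wend_app, H2. simpl.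
    rewrite hd_rv. unfold hd at 1. repeat split; auto.
Qed.

Lemma hd_morph {G H : graph} (f : gmap G H) d :
  is_morphism f -> mV f (hd G d) = hd H (mD f d).
Proof. intros [H1 H2]. unfold hd. now rewrite <- H2, H1. Qed.

Lemma map_walk {G H : graph} (f : gmap G H) x U :
  is_morphism f -> is_walk G x U ->
  is_walk H (mV f x) (map (mD f) U) /\ wend H (mV f x) (map (mD f) U) = mV f (wend G x U).
Proof.
  intros Hm. revert x; induction U as [|d U IH]; intros x Hw; simpl in *; auto.
  destruct Hw as [Hd Hw]. destruct (IH _ Hw) as [H1 H2].
  rewrite <- hd_morph by auto. repeat split; auto.
  destruct Hm as [Hm _]. now rewrite Hm, Hd.
Qed.

Lemma map_revw {G H : graph} (f : gmap G H) U :
  is_morphism f -> map (mD f) (revw G U) = revw H (map (mD f) U).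
Proof.
  intros [_ Hm]. unfold revw. rewrite map_rev, !map_map. f_equal.
  apply map_ext. auto.
Qed.

Lemma step_ex {Y G : graph} (f : gmap Y G) (c : V Y) (e : D G) :
  exists v, (exists d, tl Y d = c /\ mD f d = e /\ hd Y d = v) \/
            ~ (exists d, tl Y d = c /\ mD f d = e).
Proof.
  destruct (classic (exists d, tl Y d = c /\ mD f d = e)) as [[d [H1 H2]]|Hn].
  - exists (hd Y d). left. eauto.
  - exists c. now right.
Qed.

Definition step {Y G : graph} (f : gmap Y G) (c : V Y) (e : D G) : V Y :=
  proj1_sig (constructive_indefinite_description _ (step_ex f c e)).

Fixpoint lend {Y G : graph} (f : gmap Y G) (c : V Y) (W : list (D G)) : V Y :=
  match W with
  | [] => c
  | e :: W' => lend f (step f c e) W'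
  end.

Lemma step_spec {Y G : graph} (f : gmap Y G) c e d :
  is_covering f -> tl Y d = c -> mD f d = e -> hd Y d = step f c e.
Proof.
  intros Hc H1 H2. unfold step.
  destruct (constructive_indefinite_description _ _) as [v [[d' [H3 [H4 H5]]]|Hn]]; simpl.
  - destruct Hc as [_ [Hm [_ Hu]]].
    assert (He : tl G e = mV f c).
    { subst. destruct Hm as [Hm _]. now rewrite Hm. }
    destruct (Hu c e He) as [d0 [_ Hu0]].
    assert (E : d = d') by (rewrite <- (Hu0 d) by auto; rewrite <- (Hu0 d') by auto; auto).
    subst; auto.
  - exfalso. apply Hn. eauto.
Qed.

Lemma lift_ex {Y G : graph} (f : gmap Y G) c e :
  is_covering f -> tl G e = mV f c -> exists d, tl Y d = c /\ mD f d = e.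
Proof.
  intros [_ [_ [_ Hu]]] He. destruct (Hu c e He) as [d [Hd _]]. eauto.
Qed.

Lemma lend_app {Y G : graph} (f : gmap Y G) c A B :
  lend f c (A ++ B) = lend f (lend f c A) B.
Proof. revert c; induction A; intros; simpl; auto. Qed.

Lemma lend_lift {Y G : graph} (f : gmap Y G) c W :
  is_covering f -> is_walk G (mV f c) W ->
  exists Wh, is_walk Y c Wh /\ map (mD f) Wh = W /\ wend Y c Wh = lend f c W.
Proof.
  intros Hc. revert c; induction W as [|e W IH]; intros c Hw; simpl in *.
  - exists []. simpl. auto.
  - destruct Hw as [He Hw].
    destruct (lift_ex f c e Hc He) as [d [Hd1 Hd2]].
    assert (Hs := step_spec f c e d Hc Hd1 Hd2).
    assert (Hm : mV f (step f c e) = hd G e).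
    { rewrite <- Hs, <- Hd2. apply hd_morph. apply Hc. }
    rewrite <- Hm in Hw. destruct (IH _ Hw) as [Wh [H1 [H2 H3]]].
    exists (d :: Wh). simpl. rewrite Hs, Hd2, H2. auto.
Qed.

Lemma lend_wend {Y G : graph} (f : gmap Y G) c Wh :
  is_covering f -> is_walk Y c Wh -> lend f c (map (mD f) Wh) = wend Y c Wh.
Proof.
  intros Hc. revert c; induction Wh as [|d Wh IH]; intros c Hw; simpl in *; auto.
  destruct Hw as [H1 H2]. rewrite <- (step_spec f c (mD f d) d Hc H1 eq_refl). auto.
Qed.

Lemma lend_proj {Y G : graph} (f : gmap Y G) c W :
  is_covering f -> is_walk G (mV f c) W -> mV f (lend f c W) = wend G (mV f c) W.
Proof.
  intros Hc Hw. destruct (lend_lift f c W Hc Hw) as [Wh [H1 [H2 H3]]].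
  rewrite <- H3. subst W. destruct (map_walk f c Wh (proj1 (proj2 Hc)) H1). auto.
Qed.

Lemma lend_rev {Y G : graph} (f : gmap Y G) c W :
  is_covering f -> is_walk G (mV f c) W -> lend f (lend f c W) (revw G W) = c.
Proof.
  intros Hc Hw. destruct (lend_lift f c W Hc Hw) as [Wh [H1 [H2 H3]]].
  subst W. rewrite <- map_revw by apply Hc. rewrite <- H3.
  rewrite lend_wend by (auto; now apply revw_walk). now apply revw_walk.
Qed.

Lemma lend_within {Y G : graph} (f : gmap Y G) c W :
  is_covering f -> is_walk G (mV f c) W -> within c (lend f c W) (length W).
Proof.
  intros Hc Hw. destruct (lend_lift f c W Hc Hw) as [Wh [H1 [H2 H3]]].
  exists Wh. subst. rewrite length_map. auto.
Qed.

Lemma within_le {G : graph} (c x : V G) n m : within c x n -> n <= m -> within c x m.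
Proof. intros [w [H1 [H2 H3]]] Hnm. exists w. repeat split; auto. lia. Qed.

Lemma within_S {G : graph} (c : V G) d n : within c (tl G d) n -> within c (hd G d) (S n).
Proof.
  intros [w [H1 [H2 H3]]]. exists (w ++ [d]).
  rewrite is_walk_app, wend_app, length_app, H2. simpl. repeat split; auto. lia.
Qed.

Lemma ballD_tl {G : graph} (c : V G) r d a b :
  within c (tl G d) a -> within c (hd G d) b -> a + 1 + b <= r -> ballV c r (tl G d).
Proof.
  intros Ha Hb Hr. destruct (le_lt_dec a (S b)).
  - exists a. split; auto. lia.
  - exists (S b). split; [|lia].
    rewrite <- hd_rv. apply within_S. exact Hb.
Qed.

Lemma ballD_ends {G : graph} (c : V G) r d :
  ballD c r d -> ballV c r (tl G d) /\ ballV c r (hd G d).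
Proof.
  intros [a [b [Ha [Hb Hr]]]]. split.
  - eapply ballD_tl; eauto.
  - assert (E1 : hd G d = tl G (rv G d)) by reflexivity.
    assert (E2 : tl G d = hd G (rv G d)) by (now rewrite hd_rv).
    rewrite E1. rewrite E1 in Hb. rewrite E2 in Ha.
    apply (ballD_tl c r (rv G d) b a); auto. lia.
Qed.

Lemma closed_lift_short {C G : graph} (p : gmap C G) r c Q :
  is_covering p -> preserves_balls p r -> is_walk G (mV p c) Q ->
  wend G (mV p c) Q = mV p c -> length Q <= r -> lend p c Q = c.
Proof.
  intros Hc Hb HQ HQe HQl.
  assert (Hm : is_morphism p) by apply Hc.
  destruct (Hb c) as [_ [_ [H3 [_ [H5 _]]]]].
  set (y := mV p c) in *.
  assert (Hk : exists k, length Q = 2 * k \/ length Q = 2 * k + 1).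
  { destruct (Nat.Even_or_Odd (length Q)) as [[k Hk]|[k Hk]]; exists k; auto. }
  destruct Hk as [k Hk].
  assert (Hkl : k <= length Q) by lia.
  pose (A := firstn k Q). pose (B := skipn k Q).
  assert (HAB : Q = A ++ B) by (symmetry; apply firstn_skipn).
  assert (HAl : length A = k) by (apply firstn_length_le; auto).
  assert (HBl : length B = length Q - k) by apply length_skipn.
  clearbody A B. subst Q.
  apply is_walk_app in HQ. destruct HQ as [HA HB].
  rewrite wend_app in HQe.
  set (m := wend G y A) in *.
  destruct (revw_walk G m B HB) as [HrB HrBe]. rewrite HQe in HrB, HrBe.
  rewrite lend_app.
  assert (Ha_ball : ballV c r (lend p c A)).
  { exists k. split; [|lia]. rewrite <- HAl. now apply lend_within. }
  assert (Ha_proj : mV p (lend p c A) = m) by (apply lend_proj; auto).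
  destruct Hk as [Hk|Hk].
  -
    assert (E : lend p c A = lend p c (revw G B)).
    { apply H3; auto.
      - exists k. split; [|lia]. replace k with (length (revw G B)).
        + now apply lend_within.
        + rewrite length_revw. lia.
      - rewrite Ha_proj. rewrite lend_proj by auto. change (mV p c) with y. now rewrite HrBe. }
    rewrite E. rewrite <- (revw_invol G B) at 2. apply lend_rev; auto.
  -
    destruct B as [|e B']; simpl in HBl; [lia|].
    simpl in HB. destruct HB as [Hte HB'].
    simpl in HQe.
    destruct (revw_walk G (hd G e) B' HB') as [HrB' HrB'e]. rewrite HQe in HrB', HrB'e.
    assert (Hb_ball : ballV c r (lend p c (revw G B'))).
    { exists k. split; [|lia]. replace k with (length (revw G B')).
      + now apply lend_within.
      + rewrite length_revw. lia. }
    assert (Hb_proj : mV p (lend p c (revw G B')) = hd G e).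
    { rewrite lend_proj by auto. exact HrB'e. }
    assert (HeD : ballD y r e).
    { exists k, k. split; [|split].
      - exists A. repeat split; auto. lia.
      - exists (revw G B'). repeat split; auto. rewrite length_revw. lia.
      - lia. }
    destruct (H5 e HeD) as [dh [Hdh Hdhe]].
    destruct (ballD_ends c r dh Hdh) as [Ht Hh].
    assert (E1 : tl C dh = lend p c A).
    { apply H3; auto. rewrite Ha_proj. destruct Hm as [Hm1 _].
      rewrite <- Hm1, Hdhe. auto. }
    assert (E2 : hd C dh = lend p c (revw G B')).
    { apply H3; auto. rewrite Hb_proj. rewrite hd_morph by auto. now rewrite Hdhe. }
    simpl. rewrite <- (step_spec p _ e dh Hc E1 Hdhe). rewrite E2.
    rewrite <- (revw_invol G B') at 2. apply lend_rev; auto.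
Qed.

Lemma rstep_lend {C G : graph} (p : gmap C G) r x0 c A B :
  is_covering p -> preserves_balls p r -> mV p c = x0 -> rstep G r x0 A B ->
  (is_walk G x0 A <-> is_walk G x0 B) /\ (is_walk G x0 A -> lend p c A = lend p c B).
Proof.
  intros Hc Hb Hpc Hs. destruct Hs as [a b d Hd | a b Q HQ HQl].
  - rewrite !is_walk_app. simpl. rewrite hd_rv, Hd. split.
    + assert (tl G (rv G d) = hd G d) by reflexivity. tauto.
    + intros [Ha Hbw]. rewrite !lend_app.
      assert (Hp : mV p (lend p c a) = wend G x0 a) by (rewrite <- Hpc; apply lend_proj; subst; auto).
      change (d :: rv G d :: b) with ([d] ++ [rv G d] ++ b).
      rewrite !lend_app. change [rv G d] with (revw G [d]).
      rewrite lend_rev; auto. rewrite Hp. simpl. auto.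
  - destruct HQ as [HQw [HQe _]].
    rewrite !is_walk_app. rewrite HQe. split; [tauto|].
    intros [Ha Hbw]. rewrite !lend_app.
    assert (Hp : mV p (lend p c a) = wend G x0 a) by (rewrite <- Hpc; apply lend_proj; subst; auto).
    rewrite (closed_lift_short p r (lend p c a) Q); auto; rewrite Hp; auto.
Qed.

Lemma requiv_lend {C G : graph} (p : gmap C G) r x0 c A B :
  is_covering p -> preserves_balls p r -> mV p c = x0 -> requiv G r x0 A B ->
  (is_walk G x0 A <-> is_walk G x0 B) /\ (is_walk G x0 A -> lend p c A = lend p c B).
Proof.
  intros Hc Hb Hpc H. induction H as [A B Hs| A | A B _ [IH1 IH2] | A B E _ [IH1 IH2] _ [IH3 IH4]].
  - eapply rstep_lend; eauto.
  - tauto.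
  - split; [tauto|]. intros HB. symmetry. apply IH2. tauto.
  - split; [tauto|]. intros HA. rewrite IH2 by auto. apply IH4. tauto.
Qed.

Lemma rstep_ctx (G : graph) r x0 u s A B :
  wend G x0 u = x0 -> rstep G r x0 A B -> rstep G r x0 (u ++ A ++ s) (u ++ B ++ s).
Proof.
  intros Hu Hs. destruct Hs as [a b d Hd | a b Q HQ HQl].
  - replace (u ++ (a ++ b) ++ s) with ((u ++ a) ++ (b ++ s)) by (now rewrite !app_assoc).
    replace (u ++ (a ++ d :: rv G d :: b) ++ s) with ((u ++ a) ++ d :: rv G d :: (b ++ s))
      by (now rewrite <- !app_assoc).
    constructor. now rewrite wend_app, Hu.
  - replace (u ++ (a ++ b) ++ s) with ((u ++ a) ++ (b ++ s)) by (now rewrite !app_assoc).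
    replace (u ++ (a ++ Q ++ b) ++ s) with ((u ++ a) ++ Q ++ (b ++ s))
      by (now rewrite <- !app_assoc).
    constructor; auto. now rewrite wend_app, Hu.
Qed.

Lemma requiv_ctx (G : graph) r x0 u s A B :
  wend G x0 u = x0 -> requiv G r x0 A B -> requiv G r x0 (u ++ A ++ s) (u ++ B ++ s).
Proof.
  intros Hu H. induction H.
  - apply rst_step. now apply rstep_ctx.
  - apply rst_refl.
  - now apply rst_sym.
  - eapply rst_trans; eauto.
Qed.

Lemma requiv_cancel (G : graph) r x0 u : forall a b,
  is_walk G (wend G x0 a) u -> requiv G r x0 (a ++ u ++ revw G u ++ b) (a ++ b).
Proof.
  induction u as [|e u IH]; intros a b Hw.
  - apply rst_refl.
  - simpl in Hw. destruct Hw as [He Hw].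
    replace (a ++ (e :: u) ++ revw G (e :: u) ++ b) with
      ((a ++ [e]) ++ u ++ revw G u ++ (rv G e :: b))
      by (rewrite revw_cons; simpl; now rewrite <- !app_assoc).
    eapply rst_trans.
    + apply IH. rewrite wend_app. exact Hw.
    + rewrite <- app_assoc. simpl. apply rst_sym. apply rst_step.
      constructor. auto.
Qed.

Lemma pi1r_lift {G X : graph} (pr : gmap X G) r x0 xh0 xh1 W :
  is_r_local_covering r x0 pr xh0 -> mV pr xh1 = x0 ->
  is_walk G x0 W -> wend G x0 W = x0 ->
  (lend pr xh1 W = xh1 <-> in_pi1r G r x0 W).
Proof.
  intros [Hc [H0 Hpr]] H1 HW HWe.
  assert (Hm : is_morphism pr) by apply Hc.
  destruct Hc as [[_ Hconn] Hc'].
  assert (Hc : is_covering pr) by (split; [split; auto; exists xh0; auto| auto]).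
  destruct (Hconn xh0 xh1) as [Vw [HV HVe]].
  set (u := map (mD pr) Vw).
  destruct (map_walk pr xh0 Vw Hm HV) as [Hu Hue].
  rewrite H0, HVe, H1 in Hue. rewrite H0 in Hu. fold u in Hu, Hue.
  assert (Hlu : lend pr xh0 u = xh1) by (unfold u; rewrite lend_wend; auto).
  destruct (revw_walk G x0 u Hu) as [Hru Hrue]. rewrite Hue in Hru, Hrue.
  set (Z := u ++ W ++ revw G u).
  assert (HZ : is_walk G x0 Z).
  { unfold Z. rewrite !is_walk_app, Hue, HWe. auto. }
  assert (HZe : wend G x0 Z = x0).
  { unfold Z. rewrite !wend_app, Hue, HWe. auto. }
  assert (K1 : lend pr xh0 Z = xh0 <-> in_pi1r G r x0 Z).
  { rewrite <- (Hpr Z HZ HZe). split.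
    - intros E. rewrite <- H0 in HZ. destruct (lend_lift pr xh0 Z Hc HZ) as [Zh [A1 [A2 A3]]].
      exists Zh. rewrite A3. auto.
    - intros [Zh [A1 [A2 A3]]]. subst Z. rewrite <- A2. rewrite lend_wend; auto. }
  assert (Hz : mV pr (lend pr xh1 W) = x0).
  { rewrite lend_proj; auto; rewrite H1; auto. }
  assert (K2 : lend pr xh0 Z = xh0 <-> lend pr xh1 W = xh1).
  { unfold Z. rewrite !lend_app, Hlu. split.
    - intros E. set (z := lend pr xh1 W) in *.
      assert (Ez : lend pr (lend pr z (revw G u)) (revw G (revw G u)) = z).
      { apply lend_rev; auto. rewrite Hz. auto. }
      rewrite E, revw_invol, Hlu in Ez. auto.
    - intros E. rewrite E. rewrite <- Hlu. apply lend_rev; auto. rewrite H0; auto. }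
  assert (K3 : in_pi1r G r x0 Z <-> in_pi1r G r x0 W).
  { unfold in_pi1r, Z. split.
    - intros HZr.
      eapply rst_trans.
      { apply rst_sym. apply (requiv_cancel G r x0 (revw G u) [] W). simpl. auto. }
      rewrite revw_invol.
      eapply rst_trans.
      { apply rst_sym.
        pose proof (requiv_cancel G r x0 (revw G u) (revw G u ++ u ++ W) []) as Hc2.
        rewrite revw_invol, !app_nil_r in Hc2. apply Hc2.
        rewrite !wend_app, Hrue, Hue, HWe. auto. }
      replace ((revw G u ++ u ++ W) ++ revw G u ++ u) with (revw G u ++ (u ++ W ++ revw G u) ++ u)
        by (now rewrite <- !app_assoc).
      eapply rst_trans.
      { apply requiv_ctx; [exact Hrue| exact HZr]. }
      simpl. pose proof (requiv_cancel G r x0 (revw G u) [] []) as Hc3.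
      rewrite revw_invol, !app_nil_r in Hc3. apply Hc3. simpl. auto.
    - intros HWr.
      eapply rst_trans.
      { apply requiv_ctx; [exact Hue| exact HWr]. }
      simpl. pose proof (requiv_cancel G r x0 u [] []) as Hc3.
      rewrite !app_nil_r in Hc3. apply Hc3. simpl. auto. }
  rewrite <- K2, K1, K3. tauto.
Qed.

Lemma cov_unique {Y G : graph} (f : gmap Y G) d1 d2 :
  is_covering f -> tl Y d1 = tl Y d2 -> mD f d1 = mD f d2 -> d1 = d2.
Proof.
  intros [_ [[Hm _] [_ Hu]]] Ht Hf.
  assert (He : tl G (mD f d1) = mV f (tl Y d1)) by apply Hm.
  destruct (Hu _ _ He) as [d0 [_ Hd0]].
  rewrite <- (Hd0 d1) by auto. apply Hd0. split; auto.
Qed.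

Lemma lift_unique {X Y G : graph} (f : gmap Y G) (g1 g2 : gmap X Y) xh0 :
  connected X -> is_morphism g1 -> is_morphism g2 -> is_covering f ->
  (forall d, mD f (mD g1 d) = mD f (mD g2 d)) -> mV g1 xh0 = mV g2 xh0 ->
  (forall x, mV g1 x = mV g2 x) /\ (forall d, mD g1 d = mD g2 d).
Proof.
  intros [_ Hconn] Hm1 Hm2 Hf Hfd H0.
  assert (HD : forall d, mV g1 (tl X d) = mV g2 (tl X d) -> mD g1 d = mD g2 d).
  { intros d E. apply (cov_unique f); auto.
    destruct Hm1 as [A1 _], Hm2 as [A2 _]. rewrite A1, A2. auto. }
  assert (HV : forall x, mV g1 x = mV g2 x).
  { intros x. destruct (Hconn xh0 x) as [w [Hw Hwe]]. subst x.
    revert xh0 H0 Hw. induction w as [|d w IH]; intros v Hv Hw; simpl in *; auto.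
    destruct Hw as [Ht Hw]. apply IH; auto.
    rewrite !hd_morph by auto. f_equal. apply HD. now rewrite Ht. }
  split; auto.
Qed.

Lemma lift_exists {X Y G : graph} (pr : gmap X G) (f : gmap Y G) xh0 yh0 x0 :
  is_covering pr -> is_covering f -> mV pr xh0 = x0 -> mV f yh0 = x0 ->
  (forall W, is_walk G x0 W -> wend G x0 W = x0 -> lend pr xh0 W = xh0 -> lend f yh0 W = yh0) ->
  exists q : gmap X Y, is_covering q /\ factors pr f q /\ mV q xh0 = yh0.
Proof.
  intros Hpr Hf H0 H1 Hcond.
  assert (Hmp : is_morphism pr) by apply Hpr.
  assert (Hmf : is_morphism f) by apply Hf.
  assert (HconnX := proj1 Hpr).
  assert (HconnY := proj1 Hf).
  pose (wk := fun x => proj1_sig (constructive_indefinite_description _ (proj2 HconnX xh0 x))).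
  assert (Hwk : forall x, is_walk X xh0 (wk x) /\ wend X xh0 (wk x) = x).
  { intros x. unfold wk. destruct (constructive_indefinite_description _ _). auto. }
  pose (qV := fun x => lend f yh0 (map (mD pr) (wk x))).
  assert (key : forall U, is_walk X xh0 U -> lend f yh0 (map (mD pr) U) = qV (wend X xh0 U)).
  { intros U HU. set (x := wend X xh0 U). destruct (Hwk x) as [Hw Hwe].
    unfold qV. set (w := wk x) in *.
    destruct (revw_walk X xh0 w Hw) as [Hrw Hrwe]. rewrite Hwe in Hrw, Hrwe.
    set (Z := U ++ revw X w).
    assert (HZ : is_walk X xh0 Z) by (unfold Z; rewrite is_walk_app; fold x; auto).
    assert (HZe : wend X xh0 Z = xh0) by (unfold Z; rewrite wend_app; fold x; auto).
    destruct (map_walk pr xh0 Z Hmp HZ) as [A1 A2]. rewrite HZe, H0 in A2. rewrite H0 in A1.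
    assert (A3 := Hcond _ A1 A2 (eq_trans (lend_wend pr xh0 Z Hpr HZ) HZe)).
    unfold Z in A3. rewrite map_app, lend_app, map_revw in A3 by auto.
    destruct (map_walk pr xh0 U Hmp HU) as [B1 B2]. rewrite H0 in B1, B2. fold x in B2.
    destruct (map_walk pr xh0 w Hmp Hw) as [C1 C2]. rewrite H0 in C1, C2. rewrite Hwe in C2.
    set (c1 := lend f yh0 (map (mD pr) U)) in *.
    assert (Hc1 : mV f c1 = mV pr x) by (unfold c1; rewrite lend_proj, H1; auto; rewrite H1; auto).
    destruct (revw_walk G x0 _ C1) as [D1 D2]. rewrite C2 in D1, D2.
    assert (E := lend_rev f c1 (revw G (map (mD pr) w)) Hf).
    rewrite Hc1, A3, revw_invol in E. symmetry. apply E. auto. }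
  assert (HqV0 : qV xh0 = yh0) by (symmetry; exact (key [] I)).
  assert (factV : forall x, mV f (qV x) = mV pr x).
  { intros x. destruct (Hwk x) as [Hw Hwe]. unfold qV.
    destruct (map_walk pr xh0 _ Hmp Hw) as [C1 C2]. rewrite H0 in C1, C2.
    rewrite lend_proj by (auto; rewrite H1; auto). rewrite H1, C2, Hwe. auto. }
  assert (Hex : forall d, exists d', tl Y d' = qV (tl X d) /\ mD f d' = mD pr d).
  { intros d. apply lift_ex; auto. rewrite factV. destruct Hmp as [Hm _]. apply Hm. }
  pose (qD := fun d => proj1_sig (constructive_indefinite_description _ (Hex d))).
  assert (HqD : forall d, tl Y (qD d) = qV (tl X d) /\ mD f (qD d) = mD pr d).
  { intros d. unfold qD. destruct (constructive_indefinite_description _ _). auto. }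
  assert (Hhd : forall d, hd Y (qD d) = qV (hd X d)).
  { intros d. destruct (Hwk (tl X d)) as [Hw Hwe].
    assert (HU : is_walk X xh0 (wk (tl X d) ++ [d])).
    { rewrite is_walk_app, Hwe. simpl. auto. }
    transitivity (qV (wend X xh0 (wk (tl X d) ++ [d]))).
    2:{ rewrite wend_app, Hwe. reflexivity. }
    rewrite <- (key _ HU).
    rewrite map_app, lend_app. simpl. fold (qV (tl X d)).
    destruct (HqD d) as [E1 E2]. apply step_spec; auto. }
  exists (@GMap X Y qV qD).
  assert (Hmq : is_morphism (@GMap X Y qV qD)).
  { split; simpl.
    - intros d. apply HqD.
    - intros d. apply (cov_unique f); auto.
      + destruct (HqD (rv X d)) as [E1 _]. rewrite E1.
        change (tl Y (rv Y (qD d))) with (hd Y (qD d)). rewrite Hhd. reflexivity.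
      + destruct Hmf as [_ Hm]. rewrite Hm.
        destruct (HqD (rv X d)) as [_ E1]. destruct (HqD d) as [_ E2]. rewrite E1, E2.
        destruct Hmp as [_ Hm']. apply Hm'. }
  split; [|split; [split; simpl; intros; symmetry; [apply factV | apply HqD]| simpl; auto]].
  split; [auto|split; [auto|split]].
  - intros y. destruct (proj2 HconnY yh0 y) as [Wh [HWh HWhe]].
    destruct (map_walk f yh0 Wh Hmf HWh) as [A1 A2].
    rewrite H1, <- H0 in A1.
    destruct (lend_lift pr xh0 _ Hpr A1) as [U [B1 [B2 B3]]].
    exists (wend X xh0 U). simpl. rewrite <- key by auto. rewrite B2.
    rewrite lend_wend; auto.
  - intros x e He. simpl in He.
    assert (He' : tl G (mD f e) = mV pr x).
    { destruct Hmf as [Hm _]. rewrite Hm, He. apply factV. }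
    destruct (lift_ex pr x (mD f e) Hpr He') as [d [Hd1 Hd2]].
    exists d. simpl. split.
    + split; auto. apply (cov_unique f); auto.
      * rewrite He, <- Hd1. apply HqD.
      * rewrite <- Hd2. apply HqD.
    + intros d' [E1 E2]. apply (cov_unique pr); [auto|congruence|].
      rewrite Hd2, <- E2. apply HqD.
Qed.

Definition gcomp {X Y Z : graph} (g : gmap Y Z) (f : gmap X Y) : gmap X Z :=
  @GMap X Z (fun x => mV g (mV f x)) (fun d => mD g (mD f d)).
Definition gid (X : graph) : gmap X X := @GMap X X (fun x => x) (fun d => d).

Lemma gcomp_morph {X Y Z : graph} (g : gmap Y Z) (f : gmap X Y) :
  is_morphism g -> is_morphism f -> is_morphism (gcomp g f).
Proof.
  intros [g1 g2] [f1 f2]. split; intros d; simpl.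
  - now rewrite g1, f1.
  - now rewrite f2, g2.
Qed.

Lemma gid_morph (X : graph) : is_morphism (gid X).
Proof. split; intros; reflexivity. Qed.

Theorem lemma4p4 (G : graph) (r : nat) (x0 : V G) (hG : connected G)
    (X : graph) (pr : gmap X G) (xh0 : V X)
    (hpr : is_r_local_covering r x0 pr xh0)
    (C : graph) (p : gmap C G) (hp : is_covering p)
    (hball : preserves_balls p r) :
  (exists q : gmap X C, is_covering q /\ factors pr p q) /\
  (forall q q' : gmap X C, is_covering q -> is_covering q' ->
     factors pr p q -> factors pr p q' -> equivalent_cov q q').
Proof.
  assert (Hprc : is_covering pr) by apply hpr.
  assert (H0 : mV pr xh0 = x0) by apply hpr.
  assert (HconnX : connected X) by apply Hprc.
  assert (Hmpr : is_morphism pr) by apply Hprc.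
  split.
  - destruct (proj1 (proj2 (proj2 hp)) x0) as [c0 Hc0].
    destruct (lift_exists pr p xh0 c0 x0 Hprc hp H0 Hc0) as [q [Hq [Fq _]]].
    + intros W HW HWe HL.
      assert (Hin : in_pi1r G r x0 W) by (apply (pi1r_lift pr r x0 xh0 xh0 W); auto).
      destruct (requiv_lend p r x0 c0 W [] hp hball Hc0 Hin) as [_ E].
      apply E; auto.
    + exists q. auto.
  - intros q q' Hq Hq' [Fq1 Fq2] [Fq1' Fq2'].
    destruct Hq' as [_ [Hmq' [Hs' _]]].
    destruct (Hs' (mV q xh0)) as [xh1 Hxh1].
    assert (H1 : mV pr xh1 = x0) by (rewrite Fq1', Hxh1, <- Fq1; auto).
    assert (Hnorm : forall xa xb W, mV pr xa = x0 -> mV pr xb = x0 ->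
               is_walk G x0 W -> wend G x0 W = x0 -> lend pr xa W = xa -> lend pr xb W = xb).
    { intros xa xb W Ha Hb HW HWe E.
      apply (pi1r_lift pr r x0 xh0 xb W); auto.
      apply (pi1r_lift pr r x0 xh0 xa W); auto. }
    destruct (lift_exists pr pr xh0 xh1 x0 Hprc Hprc H0 H1) as [h [Hh [[Fh1 Fh2] Hh0]]].
    { intros W HW HWe E. eapply Hnorm; eauto. }
    destruct (lift_exists pr pr xh1 xh0 x0 Hprc Hprc H1 H0) as [h' [Hh' [[Fh1' Fh2'] Hh0']]].
    { intros W HW HWe E. eapply Hnorm; eauto. }
    assert (Hmh : is_morphism h) by apply Hh.
    assert (Hmh' : is_morphism h') by apply Hh'.
    assert (Hmq : is_morphism q) by apply Hq.
    destruct (lift_unique p (gcomp q' h) q xh0 HconnX (gcomp_morph _ _ Hmq' Hmh) Hmq hp)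
      as [U1 U2].
    { intros d. simpl. rewrite <- Fq2', <- Fh2, <- Fq2. auto. }
    { simpl. rewrite Hh0, Hxh1. auto. }
    destruct (lift_unique pr (gcomp h' h) (gid X) xh0 HconnX (gcomp_morph _ _ Hmh' Hmh)
                (gid_morph X) Hprc) as [I1 I2].
    { intros d. simpl. rewrite <- Fh2', <- Fh2. auto. }
    { simpl. rewrite Hh0, Hh0'. auto. }
    destruct (lift_unique pr (gcomp h h') (gid X) xh1 HconnX (gcomp_morph _ _ Hmh Hmh')
                (gid_morph X) Hprc) as [J1 J2].
    { intros d. simpl. rewrite <- Fh2, <- Fh2'. auto. }
    { simpl. rewrite Hh0', Hh0. auto. }
    simpl in U1, U2, I1, I2, J1, J2.
    exists h. split; [auto|split; [|split; [|split]]].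
    + split.
      * intros a a' E. rewrite <- (I1 a), <- (I1 a'), E. auto.
      * intros b. exists (mV h' b). apply J1.
    + split.
      * intros a a' E. rewrite <- (I2 a), <- (I2 a'), E. auto.
      * intros b. exists (mD h' b). apply J2.
    + apply U1.
    + apply U2.
Qed.
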